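(* Let $H=(V,E)$ be a $3$-uniform quasi-eulerian hypergraph in which every vertex has odd degree. Then $|V|\le |E|$.
   Context: A hypergraph $H=(V,E)$ consists of a finite nonempty vertex set $V$, a finite edge set $E$ disjoint from $V$, and an incidence function assigning to each edge $e\in E$ a subset of $V$ (also denoted $e$); distinct edges may have the same vertex set. $H$ is $3$-uniform if $|e|=3$ for all $e\in E$. The degree of a vertex is the number of edges containing it. A walk is a sequence $W=v_0e_1v_1e_2\cdots e_kv_k$ with $v_i\in V$, $e_i\in E$, such that for each $i$, $v_{i-1}\ne v_i$ and $v_{i-1},v_i\in e_i$; the $v_i$ are its anchors. $W$ is closed if $k\ge 2$ and $v_0=v_k$; it is a strict trail if $e_1,\dots,e_k$ are pairwise distinct. An Euler family of $H$ is a family of closed strict trails such that every edge of $H$ lies in exactly one trail and no two trails have a common anchor; $H$ is quasi-eulerian if it has one. *)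

(* Defs.v *)
From mathcomp Require Import all_boot.
Set Implicit Arguments. Unset Strict Implicit. Unset Printing Implicit Defensive.

(* A hypergraph: vertex finType V, edge finType E, incidence inc : E -> {set V}.
   Distinct edges may share the same vertex set. *)

Definition three_uniform (V E : finType) (inc : E -> {set V}) : Prop :=
  forall e : E, #|inc e| = 3.

Definition hdegree (V E : finType) (inc : E -> {set V}) (v : V) : nat :=
  #|[set e : E | v \in inc e]|.

(* A walk v0 e1 v1 ... ek vk is represented as (v0, [:: (e1,v1); ...; (ek,vk)]). *)
Definition walk_t (V E : Type) := (V * seq (E * V))%type.

Fixpoint is_walk_from (V E : finType) (inc : E -> {set V}) (u : V)
    (s : seq (E * V)) : bool :=
  match s with
  | [::] => true
  | (e, v) :: s' =>
      [&& u != v, u \in inc e, v \in inc e & is_walk_from inc v s']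
  end.

Definition is_walk (V E : finType) (inc : E -> {set V}) (W : walk_t V E) : bool :=
  is_walk_from inc W.1 W.2.

Definition walk_edges (V E : Type) (W : walk_t V E) : seq E := map fst W.2.

Definition anchors (V E : Type) (W : walk_t V E) : seq V := W.1 :: map snd W.2.

Definition is_closed (V : eqType) (E : Type) (W : walk_t V E) : bool :=
  (2 <= size W.2) && (last W.1 (map snd W.2) == W.1).

Definition is_closed_strict_trail (V E : finType) (inc : E -> {set V})
    (W : walk_t V E) : bool :=
  [&& is_walk inc W, is_closed W & uniq (walk_edges W)].

Definition euler_family (V E : finType) (inc : E -> {set V})
    (F : seq (walk_t V E)) : Prop :=
  [/\ forall W, W \in F -> is_closed_strict_trail inc W,
      forall e : E, count (fun W => e \in walk_edges W) F = 1 &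
      forall i j, i < j < size F -> forall w0 : walk_t V E,
        [disjoint (anchors (nth w0 F i)) & (anchors (nth w0 F j))]].

Definition quasi_eulerian (V E : finType) (inc : E -> {set V}) : Prop :=
  exists F : seq (walk_t V E), euler_family inc F.

(* Main.v *)
Require Import Defs.
From mathcomp Require Import all_boot.

Section Aux.
Variables (V E : finType) (inc : E -> {set V}).
Implicit Types (u v : V).

Fixpoint stp (u : V) (s : seq (E * V)) : seq (E * V * V) :=
  match s with
  | [::] => [::]
  | (e, v) :: s' => (e, u, v) :: stp v s'
  end.

Definition good (st : E * V * V) : bool :=
  [&& st.1.2 != st.2, st.1.2 \in inc st.1.1 & st.2 \in inc st.1.1].

Lemma stp_edges u s : map (fun st => st.1.1) (stp u s) = map fst s.
Proof. by elim: s u => [|[e v] s IH] u //=; rewrite IH. Qed.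

Lemma stp_good u s : is_walk_from inc u s -> all good (stp u s).
Proof.
elim: s u => [|[e v] s IH] u //= /and4P [h1 h2 h3 h4].
by rewrite /good /= h1 h2 h3 IH.
Qed.

Lemma stp_cnt1 u s v :
  count (fun st => st.1.2 == v) (stp u s) = count_mem v (belast u (map snd s)).
Proof. by elim: s u => [|[e w] s IH] u //=; rewrite IH eq_sym. Qed.

Lemma stp_cnt2 u s v :
  count (fun st => st.2 == v) (stp u s) = count_mem v (map snd s).
Proof. by elim: s u => [|[e w] s IH] u //=; rewrite IH eq_sym. Qed.

Definition endp v (st : E * V * V) := (st.1.2 == v) || (st.2 == v).

Lemma stp_even W v : is_closed_strict_trail inc W ->
  count (endp v) (stp W.1 W.2) = (count_mem v (map snd W.2)).*2.
Proof.
case: W => u s /and3P [hw /andP [_ hc] _] /=.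
have hg := @stp_good u s hw.
have := count_predUI (fun st : E * V * V => st.1.2 == v) (fun st => st.2 == v) (stp u s).
have -> : count (predI (fun st : E * V * V => st.1.2 == v) (fun st => st.2 == v)) (stp u s) = 0.
  apply/eqP; rewrite -leqn0 leqNgt -has_count; apply/hasPn => st /(allP hg).
  by rewrite /good /= => /and3P [h _ _]; apply/negP => /andP [/eqP a /eqP b]; move: h; rewrite a b eqxx.
rewrite addn0 => ->.
rewrite stp_cnt1 stp_cnt2 -addnn; congr (_ + _).
have := congr1 (count_mem v) (lastI u (map snd s)).
rewrite -cats1 count_cat /= (eqP hc) addn0 addnC /= => /eqP; rewrite eqn_add2r => /eqP ->.
done.
Qed.


Definition LL (F : seq (walk_t V E)) := flatten (map (fun W => stp W.1 W.2) F).

Lemma LL_good F : (forall W, W \in F -> is_closed_strict_trail inc W) -> all good (LL F).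
Proof.
elim: F => [|W F IH] //= h; rewrite all_cat IH ?andbT.
  by have /and3P [hw _ _] := h W (mem_head _ _); exact: (@stp_good W.1 W.2 hw).
by move=> W' hW'; apply: h; rewrite inE hW' orbT.
Qed.

Lemma LL_even F v : (forall W, W \in F -> is_closed_strict_trail inc W) ->
  ~~ odd (count (endp v) (LL F)).
Proof.
elim: F => [|W F IH] //= h; rewrite count_cat oddD stp_even ?odd_double ?IH //.
  by move=> W' hW'; apply: h; rewrite inE hW' orbT.
by apply: h; rewrite mem_head.
Qed.

Lemma LL_edges F : map (fun st => st.1.1) (LL F) = flatten (map (@walk_edges V E) F).
Proof. by elim: F => [|W F IH] //=; rewrite map_cat stp_edges IH. Qed.

End Aux.

Theorem corollary2p40 (V E : finType) (inc : E -> {set V}) :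
  0 < #|V| ->
  three_uniform inc ->
  quasi_eulerian inc ->
  (forall v : V, odd (hdegree inc v)) ->
  #|V| <= #|E|.
Proof.
move=> _ h3 [F [hF hcnt _]] hodd.
set L := LL V E F.
have hg : all (good V E inc) L := @LL_good V E inc F hF.
set es := flatten (map (@walk_edges V E) F).
have hes : forall e, count_mem e es = 1.
  move=> e; rewrite /es count_flatten -map_comp -(hcnt e) -sumn_count.
  congr sumn; apply/eq_in_map => W hW /=.
  by apply: count_uniq_mem; have /and3P [_ _ u] := hF W hW.
have ues : uniq es by apply: count_mem_uniq => e; rewrite hes; apply/esym; rewrite -has_pred1 has_count hes.
have ines : forall e, e \in es by move=> e; rewrite -has_pred1 has_count hes.
have hdeg : forall v, count (fun st : E * V * V => v \in inc st.1.1) L = hdegree inc v.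
  move=> v; rewrite /hdegree.
  have -> : count (fun st : E * V * V => v \in inc st.1.1) L = count (fun e => v \in inc e) es.
    by rewrite /es -(LL_edges V E F) count_map.
  rewrite -size_filter; apply/esym; rewrite -(card_uniqP _); last exact: filter_uniq.
  by apply: eq_card => e; rewrite inE mem_filter ines andbT.
set pv := fun v (st : E * V * V) => (v \in inc st.1.1) && ~~ endp V E v st.
have hpos : forall v, 0 < count (pv v) L.
  move=> v; have := hodd v; rewrite -hdeg.
  have -> : count (fun st : E * V * V => v \in inc st.1.1) L =
     count (predI (endp V E v) (fun st : E * V * V => v \in inc st.1.1)) L + count (pv v) L.
    rewrite -size_filter -(count_predC (endp V E v)) !count_filter; congr (_ + _).
    by apply: eq_count => st; rewrite /pv /= andbC.
  have -> : count (predI (endp V E v) (fun st : E * V * V => v \in inc st.1.1)) L = count (endp V E v) L.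
    apply: eq_in_count => st /(allP hg) /and3P [_ ha hb] /=.
    by case: (boolP (endp V E v st)) => //= /orP [] /eqP <-.
  rewrite oddD (negbTE (@LL_even V E inc F v hF)) /=; by case: count.
have hone : forall st, st \in L -> #|[set v | pv v st]| = 1.
  move=> st /(allP hg) /and3P [hne ha hb].
  have -> : [set v | pv v st] = inc st.1.1 :\: [set st.1.2; st.2].
    apply/setP => v; rewrite !inE /pv /endp andbC; congr (_ && _).
    by rewrite !(eq_sym v).
  rewrite cardsD (setIidPr _); first by rewrite cards2 hne h3.
  by apply/subsetP => v; rewrite !inE => /orP [] /eqP ->.
have -> : #|E| = size L.
  rewrite -(size_map (fun st : E * V * V => st.1.1)) /L (LL_edges V E F).
  rewrite -/es; move/card_uniqP: ues <-; apply: eq_card => e; by rewrite ines.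
apply: (@leq_trans (\sum_(v : V) count (pv v) L)).
  by rewrite -sum1_card; apply: leq_sum => v _; apply: hpos.
rewrite -sum1_size.
under eq_bigr do rewrite -sum1_count big_mkcond.
rewrite exchange_big /= big_seq [X in _ <= X]big_seq; apply: leq_sum => st hst.
by rewrite -big_mkcond sum1_card -(hone st hst) cardsE.
Qed.
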